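(* Let $a,b,c,f\in C^\infty(\mathbb R)$, $K_1=uu_x$, $K_3=a(u)u_{xxx}+b(u)u_{xx}u_x+c(u)u_x^3$ and $Q_1=f(u)u_x$. Then $Q_3=g_1u_{xxx}+g_2u_{xx}u_x+g_3u_x^3\in\mathcal D_3$ with $$g_1=af',\qquad g_2=bf'+2af'',\qquad g_3=cf'+\tfrac12 bf''+\tfrac12 af'''$$ satisfies $K_1'[Q_3]-Q_3'[K_1]=Q_1'[K_3]-K_3'[Q_1]$, and it is the unique element of $\mathcal D_3$ doing so. Equivalently, $u_\tau=Q_1+\hbar^2Q_3$ commutes with $u_t=K_1+\hbar^2K_3$ up to terms of order $\hbar^4$.
   Context: $u_k=\partial_x^ku$; $\mathcal D=C^\infty(\mathbb R)[u_1,u_2,\dots]$ (coefficients smooth functions of $u$), graded by $\deg u_k=k$, coefficients of degree $0$; $\mathcal D_k$ is the span of degree-$k$ monomials. Total derivative $D=\sum_{r\ge0}u_{r+1}\partial/\partial u_r$ ($u_0=u$); Fréchet derivative $P'[V]=\sum_{r\ge0}\frac{\partial P}{\partial u_r}D^rV$. Primes on $a,b,c,f$ denote derivatives with respect to $u$. *)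

(* Defs.v *)
From Stdlib Require Import Reals.
From Coquelicot Require Import Coquelicot.
Open Scope R_scope.

(* A jet: the values (u, u_1, u_2, ...) of u and its x-derivatives. *)
Definition jet := nat -> R.

(* A differential function: a function of the jet together with an order
   [ord] such that it depends only on u_0, ..., u_ord.  Elements of the
   differential algebra D are realised as such (polynomial in u_1,u_2,...
   with smooth coefficients in u). *)
Record DiffFun := mkDF { ord : nat; dfun : jet -> R }.

Definition jet_upd (j : jet) (r : nat) (t : R) : jet :=
  fun k => if Nat.eqb k r then t else j k.

Definition partialD (r : nat) (P : jet -> R) (j : jet) : R :=
  Derive (fun t => P (jet_upd j r t)) (j r).

(* total derivative D = sum_{r>=0} u_{r+1} d/du_r  (terms r > ord vanish) *)
Definition totalD (P : DiffFun) : DiffFun :=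
  mkDF (S (ord P))
    (fun j => sum_f_R0 (fun r => j (S r) * partialD r (dfun P) j) (ord P)).

(* Frechet derivative P'[V] = sum_{r>=0} (dP/du_r) D^r V  (terms r > ord P vanish) *)
Definition frechet (P V : DiffFun) : jet -> R :=
  fun j => sum_f_R0
    (fun r => partialD r (dfun P) j * dfun (Nat.iter r totalD V) j) (ord P).

Definition smooth (f : R -> R) : Prop :=
  forall (n : nat) (x : R), ex_derive (Derive_n f n) x.

Definition mkD3 (g1 g2 g3 : R -> R) : DiffFun :=
  mkDF 3 (fun j => g1 (j 0%nat) * j 3%nat + g2 (j 0%nat) * j 2%nat * j 1%nat
                   + g3 (j 0%nat) * (j 1%nat) ^ 3).

Definition K1 : DiffFun := mkDF 1 (fun j => j 0%nat * j 1%nat).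
Definition Q1 (f : R -> R) : DiffFun := mkDF 1 (fun j => f (j 0%nat) * j 1%nat).
Definition K3 (a b c : R -> R) : DiffFun :=
  mkDF 3 (fun j => a (j 0%nat) * j 3%nat + b (j 0%nat) * j 2%nat * j 1%nat
                   + c (j 0%nat) * (j 1%nat) ^ 3).

Definition Q3 (a b c f : R -> R) : DiffFun :=
  mkD3 (fun x => a x * Derive_n f 1 x)
       (fun x => b x * Derive_n f 1 x + 2 * a x * Derive_n f 2 x)
       (fun x => c x * Derive_n f 1 x + / 2 * b x * Derive_n f 2 x
                 + / 2 * a x * Derive_n f 3 x).

Definition comm_cond (a b c f : R -> R) (Q : DiffFun) : Prop :=
  forall j : jet,
    frechet K1 Q j - frechet Q K1 j = frechet (Q1 f) (K3 a b c) j - frechet (K3 a b c) (Q1 f) j.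

(* Main.v *)
Require Import Defs.
From Stdlib Require Import Reals Lra.
From Coquelicot Require Import Coquelicot.
Open Scope R_scope.

Lemma partialD_is r P j d : is_derive (fun t => P (jet_upd j r t)) (j r) d -> partialD r P j = d.
Proof. intros H; unfold partialD; now apply is_derive_unique. Qed.

Lemma partialD_ext r P P' j : (forall j, P j = P' j) -> partialD r P j = partialD r P' j.
Proof. intros H; unfold partialD; apply Derive_ext; intros; apply H. Qed.

Section S.
Variable f : R -> R.
Hypothesis hf : smooth f.

Ltac sdx := repeat split; try exact I;
  first [exact (hf 0%nat _) | exact (hf 1%nat _) | exact (hf 2%nat _) | exact (hf 3%nat _)].

Ltac pd r := erewrite (partialD_is r); [| unfold jet_upd; cbn [Nat.eqb]; auto_derive; [..|reflexivity]; try exact I; try sdx].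

Ltac fixD := try change (Derive (fun x => f x)) with (Derive_n f 1);
  repeat match goal with |- context [Derive (fun x => Derive_n f ?k x)] =>
    change (Derive (fun x => Derive_n f k x)) with (Derive_n f (S k)) end.

Lemma DQ1 j : dfun (totalD (Q1 f)) j = Derive_n f 1 (j 0%nat) * j 1%nat * j 1%nat + j 2%nat * f (j 0%nat).
Proof.
  unfold totalD; cbn [dfun ord Q1 sum_f_R0].
  pd 0%nat. pd 1%nat. fixD. ring.
Qed.

Lemma D2Q1 j : dfun (totalD (totalD (Q1 f))) j = Derive_n f 2 (j 0%nat) * j 1%nat ^ 3
   + 3 * Derive_n f 1 (j 0%nat) * j 1%nat * j 2%nat + f (j 0%nat) * j 3%nat.
Proof.
  unfold totalD at 1; cbn [dfun ord Q1 sum_f_R0 totalD].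
  rewrite !(partialD_ext _ _ _ _ DQ1).
  pd 0%nat. pd 1%nat. pd 2%nat. fixD. ring.
Qed.

Lemma D3Q1 j : dfun (totalD (totalD (totalD (Q1 f)))) j = Derive_n f 3 (j 0%nat) * j 1%nat ^ 4
   + 6 * Derive_n f 2 (j 0%nat) * j 1%nat ^ 2 * j 2%nat + 3 * Derive_n f 1 (j 0%nat) * j 2%nat ^ 2
   + 4 * Derive_n f 1 (j 0%nat) * j 1%nat * j 3%nat + f (j 0%nat) * j 4%nat.
Proof.
  unfold totalD at 1; cbn [dfun ord Q1 sum_f_R0 totalD].
  rewrite !(partialD_ext _ _ _ _ D2Q1).
  pd 0%nat. pd 1%nat. pd 2%nat. pd 3%nat. fixD. ring.
Qed.

Ltac pdp r P := erewrite (partialD_is r P); [| unfold jet_upd; cbn [Nat.eqb]; auto_derive; [..|reflexivity]; try exact I; try sdx].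
Lemma iter0 (V : DiffFun) : Nat.iter 0 totalD V = V. Proof. reflexivity. Qed.
Lemma iterS n (V : DiffFun) : Nat.iter (S n) totalD V = totalD (Nat.iter n totalD V). Proof. reflexivity. Qed.

Lemma RHS a b c j : frechet (Q1 f) (K3 a b c) j - frechet (K3 a b c) (Q1 f) j =
  -3 * a (j 0%nat) * Derive_n f 1 (j 0%nat) * (j 1%nat * j 3%nat + j 2%nat * j 2%nat)
  - (3 * b (j 0%nat) * Derive_n f 1 (j 0%nat) + 6 * a (j 0%nat) * Derive_n f 2 (j 0%nat)) * j 1%nat ^ 2 * j 2%nat
  - (2 * c (j 0%nat) * Derive_n f 1 (j 0%nat) + b (j 0%nat) * Derive_n f 2 (j 0%nat)
     + a (j 0%nat) * Derive_n f 3 (j 0%nat)) * j 1%nat ^ 4.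
Proof.
  unfold frechet; cbn [dfun ord Q1 K3 sum_f_R0].
  rewrite ?iterS, ?iter0.
  rewrite D3Q1, D2Q1, DQ1.
  unfold totalD; cbn [dfun ord K3 Q1 sum_f_R0].
  pdp 0%nat (fun j0 : jet => f (j0 0%nat) * j0 1%nat). pdp 1%nat (fun j0 : jet => f (j0 0%nat) * j0 1%nat).
  pd 1%nat. pd 2%nat. pd 3%nat. fixD. ring.
Qed.
End S.

Ltac pd r := erewrite (partialD_is r); [| unfold jet_upd; cbn [Nat.eqb]; auto_derive; [..|reflexivity]; try exact I].

Lemma DK1 j : dfun (totalD K1) j = j 1%nat * j 1%nat + j 2%nat * j 0%nat.
Proof.
  unfold totalD; cbn [dfun ord K1 sum_f_R0].
  pd 0%nat. pd 1%nat. ring.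
Qed.

Lemma D2K1 j : dfun (totalD (totalD K1)) j = 3 * j 1%nat * j 2%nat + j 0%nat * j 3%nat.
Proof.
  unfold totalD at 1; cbn [dfun ord K1 sum_f_R0 totalD].
  rewrite !(partialD_ext _ _ _ _ DK1).
  pd 0%nat. pd 1%nat. pd 2%nat. ring.
Qed.

Lemma D3K1 j : dfun (totalD (totalD (totalD K1))) j = 3 * j 2%nat * j 2%nat + 4 * j 1%nat * j 3%nat + j 0%nat * j 4%nat.
Proof.
  unfold totalD at 1; cbn [dfun ord K1 sum_f_R0 totalD].
  rewrite !(partialD_ext _ _ _ _ D2K1).
  pd 0%nat. pd 1%nat. pd 2%nat. pd 3%nat. ring.
Qed.


Lemma LHS g1 g2 g3 j : frechet K1 (mkD3 g1 g2 g3) j - frechet (mkD3 g1 g2 g3) K1 j =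
  -3 * g1 (j 0%nat) * (j 1%nat * j 3%nat + j 2%nat * j 2%nat) - 3 * g2 (j 0%nat) * j 1%nat ^ 2 * j 2%nat
  - 2 * g3 (j 0%nat) * j 1%nat ^ 4.
Proof.
  unfold frechet; cbn [dfun ord K1 mkD3 sum_f_R0].
  rewrite ?iterS, ?iter0.
  rewrite D3K1, D2K1, DK1.
  unfold totalD; cbn [dfun ord K1 mkD3 sum_f_R0].
  pd 0%nat. pd 1%nat. pd 1%nat. pd 2%nat. pd 3%nat. ring.
Qed.

Theorem mainTheorem2 (a b c f : R -> R)
  (ha : smooth a) (hb : smooth b) (hc : smooth c) (hf : smooth f) :
  comm_cond a b c f (Q3 a b c f) /\
  (forall g1 g2 g3 : R -> R, smooth g1 -> smooth g2 -> smooth g3 ->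
     comm_cond a b c f (mkD3 g1 g2 g3) ->
     forall j : jet, dfun (mkD3 g1 g2 g3) j = dfun (Q3 a b c f) j).
Proof.
  split.
  - intros j. unfold Q3. rewrite LHS, (RHS f hf). cbv beta. field.
  - intros g1 g2 g3 _ _ _ H j.
    set (x := j 0%nat).
    pose proof (H (fun k => match k with 0%nat => x | 2%nat => 1 | _ => 0 end)) as e1.
    pose proof (H (fun k => match k with 0%nat => x | 1%nat => 1 | _ => 0 end)) as e2.
    pose proof (H (fun k => match k with 0%nat => x | 1%nat => 1 | 2%nat => 1 | _ => 0 end)) as e3.
    rewrite LHS, (RHS f hf) in e1, e2, e3. cbv beta iota in e1, e2, e3.
    assert (h1 : g1 x = a x * Derive_n f 1 x) by (ring_simplify in e1; lra).
    assert (h3 : g3 x = c x * Derive_n f 1 x + / 2 * b x * Derive_n f 2 x + / 2 * a x * Derive_n f 3 x)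
      by (ring_simplify in e2; lra).
    assert (h2 : g2 x = b x * Derive_n f 1 x + 2 * a x * Derive_n f 2 x)
      by (ring_simplify in e3; lra).
    unfold Q3, mkD3; cbn [dfun]. fold x. rewrite h1, h2, h3. ring.
Qed.
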